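(* For $i\in\{1,2\}$ let $G_i=(V_i,E_i)$ be finite connected graphs with $n_i=|V_i|\ge 2$, $V_1\cap V_2=\emptyset$, and let $u\in V_1$, $v\in V_2$. Let $G$ be the graph with vertex set $V_1\cup V_2$ and edge set $E_1\cup E_2\cup\{\{u,v\}\}$. Let $D_1,D_2,D_G$ be the distance matrices of $G_1,G_2,G$. Assume: (C2) $D_1$ and $D_2$ are invertible, and let $K_{G_i}=n_iD_i^{-1}\mathbf{1}_{n_i}$ be the Steinerberger curvature of $G_i$ and $k_i=\sum_{x\in V_i}K_{G_i}(x)$ its total curvature; (C1) $Z:=\big(2+\frac{k_1}{n_1}\big)\big(2+\frac{k_2}{n_2}\big)\neq 4$; (C3) $k_u:=K_{G_1}(u)\neq 0$ and $k_v:=K_{G_2}(v)\neq 0$. Then $D_G$ is invertible and the Steinerberger curvature $K_G=(n_1+n_2)D_G^{-1}\mathbf{1}_{n_1+n_2}$ of $G$ satisfies $$K_G(x)=\alpha K_{G_1}(x)\ \ (x\in V_1\setminus\{u\}),\qquad K_G(y)=\beta K_{G_2}(y)\ \ (y\in V_2\setminus\{v\}),$$ $$K_G(u)=\gamma k_u,\qquad K_G(v)=\delta k_v,$$ where $$\alpha=\frac{2(n_1+n_2)k_2}{n_1n_2(Z-4)},\quad \beta=\frac{2(n_1+n_2)k_1}{n_1n_2(Z-4)},\quad \gamma=\Big(1-\frac{k_1}{2k_u}\Big)\alpha,\quad \delta=\Big(1-\frac{k_2}{2k_v}\Big)\beta.$$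
   Context: All graphs are finite, simple, connected and undirected, with the combinatorial shortest-path distance $d$. For $G=(V,E)$ with $V=\{v_1,\dots,v_n\}$, let $D=(d(v_i,v_j))_{i,j=1}^n$ be its distance matrix and $\mathbf{1}_n\in\mathbb{R}^n$ the all-ones column vector. The Steinerberger curvature $K\in\mathbb{R}^n$ (written $K_i$ or $K(v_i)$) is defined as follows: if $DK=n\mathbf{1}_n$ has a unique solution, $K$ is that solution; if it has several solutions, $K$ is a solution for which $\min_i K_i$ is maximal; if it has no solution, $K=nD^\dagger\mathbf{1}_n$ with $D^\dagger$ the Moore–Penrose pseudoinverse. The total curvature of a vertex subset $W$ is $K(W)=\sum_{w\in W}K(w)$. *)

(* Defs.v *)
From HB Require Import structures.
From mathcomp Require Import all_boot all_order all_algebra.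
Set Implicit Arguments. Unset Strict Implicit. Unset Printing Implicit Defensive.
Import Order.TTheory GRing.Theory Num.Theory.

Definition simple_graph n (e : rel 'I_n) : Prop := symmetric e /\ irreflexive e.
Definition connected_graph n (e : rel 'I_n) : Prop := forall x y, connect e x y.

Fixpoint reach n (e : rel 'I_n) (k : nat) (x y : 'I_n) : bool :=
  if k is k'.+1 then reach e k' x y || [exists z, reach e k' x z && e z y]
  else x == y.

(* Shortest-path distance: the number of k in {0,..,n-1} such that y is not
   reachable from x by a walk of length <= k.  In a connected graph on n
   vertices the distance is <= n-1, so this is exactly d(x,y). *)
Definition gdist n (e : rel 'I_n) (x y : 'I_n) : nat :=
  \sum_(k < n) nat_of_bool (~~ reach e k x y).

Local Open Scope ring_scope.

Definition dist_mx (R : nzRingType) n (e : rel 'I_n) : 'M[R]_n :=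
  \matrix_(i, j) (gdist e i j)%:R.

Definition curv_inv (R : fieldType) n (D : 'M[R]_n) : 'cV[R]_n :=
  n%:R *: (invmx D *m const_mx 1).

Definition total_curv (R : fieldType) n (K : 'cV[R]_n) : R := \sum_i K i 0.

(* The graph G obtained from G1 (on 'I_n1) and G2 (on 'I_n2) by adding the
   edge {u,v}: vertices of G1 are lshift n2 x, vertices of G2 are rshift n1 y. *)
Definition glue n1 n2 (e1 : rel 'I_n1) (e2 : rel 'I_n2) (u : 'I_n1) (v : 'I_n2)
  : rel 'I_(n1 + n2) :=
  fun x y =>
    match split x, split y with
    | inl a, inl b => e1 a b
    | inr a, inr b => e2 a b
    | inl a, inr b => (a == u) && (b == v)
    | inr a, inl b => (b == u) && (a == v)
    end.

(* Main.v *)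
Require Import Defs.
From HB Require Import structures.
From mathcomp Require Import all_boot all_order all_algebra.
From mathcomp Require Import zify ring lra.
Import Order.TTheory GRing.Theory Num.Theory.

Module Helpers.
Set Implicit Arguments. Unset Strict Implicit. Unset Printing Implicit Defensive.

Section Reach.
Variables (n : nat) (e : rel 'I_n).

Lemma reach_mono k m x y : reach e k x y -> reach e (k + m) x y.
Proof. elim: m => [|m IH]; first by rewrite addn0. by rewrite addnS /= => /IH ->. Qed.

Lemma reach_monoL k k' x y : (k <= k')%N -> reach e k x y -> reach e k' x y.
Proof. by move=> /subnKC <-; apply: reach_mono. Qed.

Lemma reach_step k x z y : reach e k x z -> e z y -> reach e k.+1 x y.
Proof. move=> H1 H2 /=; apply/orP; right; apply/existsP; exists z; by rewrite H1. Qed.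

Lemma reach_path x p : path e x p -> reach e (size p) x (last x p).
Proof.
elim/last_ind: p => [|p z IH] /=; first by rewrite eqxx.
rewrite rcons_path => /andP[/IH H1 H2]; rewrite size_rcons last_rcons.
exact: reach_step H1 H2.
Qed.

Lemma reach_conn x y : connect e x y -> reach e n.-1 x y.
Proof.
case/connectP => p pp ->; case: (shortenP pp) => p' pp' up' _.
apply: reach_monoL (reach_path pp').
have H1 := card_uniqP up'; have H2 := max_card (mem (x :: p')).
rewrite card_ord H1 /= in H2; lia.
Qed.

Lemma sum_lt f m : (\sum_(k < m) nat_of_bool (k < f)%N)%N = minn f m.
Proof.
elim: m => [|m IH]; first by rewrite big_ord0; lia.
rewrite big_ord_recr /= IH; case: (ltnP m f) => /= H; lia.
Qed.

Lemma reach_char (f : 'I_n -> 'I_n -> nat) :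
  (forall x y, f x y = 0%N -> x = y) -> (forall x, f x x = 0%N) ->
  (forall x z y, e z y -> (f x y <= (f x z).+1)%N) ->
  (forall x y m, f x y = m.+1 -> exists2 z, e z y & f x z = m) ->
  forall k x y, reach e k x y = (f x y <= k)%N.
Proof.
move=> f0 fxx fe fp; elim => [|k IH] x y /=.
  rewrite leqn0; apply/eqP/eqP => [->|/f0 //]; exact: fxx.
rewrite IH; apply/idP/idP.
  case/orP => [H|/existsP[z /andP[]]]; first by apply: leqW.
  by rewrite IH => H1 /(fe x) H2; apply: leq_trans H2 _.
rewrite leq_eqVlt => /orP[/eqP H|H]; last by apply/orP; left.
apply/orP; right.
case: (fp _ _ _ H) => z ez fz; apply/existsP; exists z; by rewrite IH fz leqnn ez.
Qed.

Lemma gdist_char (f : 'I_n -> 'I_n -> nat) x y :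
  (forall k, reach e k x y = (f x y <= k)%N) -> (f x y < n)%N -> gdist e x y = f x y.
Proof.
move=> H lt; rewrite /gdist (eq_bigr (fun k : 'I_n => nat_of_bool (k < f x y)%N)).
  by rewrite sum_lt; lia.
by move=> k _; rewrite H -ltnNge.
Qed.

Hypothesis conn : connected_graph e.

Lemma gdist_reach k x y : reach e k x y = (gdist e x y <= k)%N.
Proof.
have ex : exists k, reach e k x y by exists n.-1; apply: reach_conn.
case: (ex_minnP ex) => m Hm Hmin.
have Hr : forall k, reach e k x y = (m <= k)%N.
  move=> j; apply/idP/idP; first exact: Hmin.
  by move=> /reach_monoL; apply.
have mn : (m < n)%N.
  have := Hmin _ (reach_conn (conn x y)); have := ltn_ord x; lia.
by rewrite Hr (gdist_char (f := fun _ _ => m)).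
Qed.

Lemma gdist_lt x y : (gdist e x y < n)%N.
Proof.
have := reach_conn (conn x y); rewrite gdist_reach; have := ltn_ord x; lia.
Qed.

Lemma gdist0 x y : gdist e x y = 0%N -> x = y.
Proof. by move=> H; have := gdist_reach 0 x y; rewrite H /= => /eqP. Qed.

Lemma gdistxx x : gdist e x x = 0%N.
Proof. by apply/eqP; rewrite -leqn0 -gdist_reach /=. Qed.

Lemma gdist_edge x z y : e z y -> (gdist e x y <= (gdist e x z).+1)%N.
Proof.
by move=> ez; rewrite -gdist_reach; apply: reach_step ez; rewrite gdist_reach.
Qed.

Lemma gdist_pred x y m : gdist e x y = m.+1 -> exists2 z, e z y & gdist e x z = m.
Proof.
move=> H; have R : reach e m.+1 x y by rewrite gdist_reach H.
move: R => /= /orP[].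
  by rewrite gdist_reach H ltnn.
case/existsP => z /andP[Hz ez]; exists z => //.
move: Hz; rewrite gdist_reach => Hz; have := gdist_edge x ez; rewrite H; lia.
Qed.
End Reach.

Lemma splitL m n (x : 'I_m) : split (lshift n x) = inl x.
Proof. exact: (unsplitK (inl _ x)). Qed.
Lemma splitR m n (x : 'I_n) : split (rshift m x) = inr x.
Proof. exact: (unsplitK (inr _ x)). Qed.

Section Glue.
Variables (n1 n2 : nat) (e1 : rel 'I_n1) (e2 : rel 'I_n2) (u : 'I_n1) (v : 'I_n2).
Hypotheses (c1 : connected_graph e1) (c2 : connected_graph e2).

Definition fG (a b : 'I_(n1 + n2)) : nat :=
  match split a, split b with
  | inl x, inl y => gdist e1 x y
  | inr x, inr y => gdist e2 x y
  | inl x, inr y => (gdist e1 x u + 1 + gdist e2 v y)%N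
  | inr x, inl y => (gdist e2 x v + 1 + gdist e1 u y)%N
  end.

Lemma fG_reach k a b : reach (glue e1 e2 u v) k a b = (fG a b <= k)%N.
Proof.
apply: reach_char => {k a b}.
- move=> a b; case: (split_ordP a) => x ->; case: (split_ordP b) => y ->;
  rewrite /fG !(splitL, splitR) => H; try lia;
  [by rewrite (gdist0 c1 H) | by rewrite (gdist0 c2 H)].
- move=> a; case: (split_ordP a) => x ->; rewrite /fG !(splitL, splitR);
  [exact: (gdistxx c1) | exact: (gdistxx c2)].
- move=> a z b; rewrite /fG /glue.
  case: (split a) => x; case: (split z) => w; case: (split b) => y //.
  + exact: gdist_edge.
  + by case/andP => /eqP -> /eqP ->; rewrite (gdistxx c2); lia.
  + by case/andP => /eqP -> /eqP ->; lia.
  + move=> H; have := gdist_edge c2 v H; lia.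
  + move=> H; have := gdist_edge c1 u H; lia.
  + by case/andP => /eqP -> /eqP ->; lia.
  + by case/andP => /eqP -> /eqP ->; rewrite (gdistxx c1); lia.
  + exact: gdist_edge.
- move=> a b m; case: (split_ordP a) => x ->; case: (split_ordP b) => y ->;
  rewrite /fG !(splitL, splitR).
  + case/(gdist_pred c1) => z ez <-; exists (lshift n2 z); rewrite /glue ?(splitL, splitR) //.
  + case E: (gdist e2 v y) => [|j].
      move: E => /(gdist0 c2) <- H; exists (lshift n2 u); rewrite /glue ?(splitL, splitR) ?eqxx //.
      lia.
    move: E => /(gdist_pred c2) [z ez Hz] H; exists (rshift n1 z);
      rewrite /glue ?(splitL, splitR) //; lia.
  + case E: (gdist e1 u y) => [|j].
      move: E => /(gdist0 c1) <- H; exists (rshift n1 v); rewrite /glue ?(splitL, splitR) ?eqxx //.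
      lia.
    move: E => /(gdist_pred c1) [z ez Hz] H; exists (lshift n2 z);
      rewrite /glue ?(splitL, splitR) //; lia.
  + case/(gdist_pred c2) => z ez <-; exists (rshift n1 z); rewrite /glue ?(splitL, splitR) //.
Qed.

Lemma gdist_glue a b : gdist (glue e1 e2 u v) a b = fG a b.
Proof.
apply: (gdist_char (f := fG)); first (move=> k; idtac; exact: (fG_reach k a b)).
case: (split_ordP a) => x ->; case: (split_ordP b) => y ->;
  rewrite /fG !(splitL, splitR).
- have := gdist_lt c1 x y; lia.
- have := gdist_lt c1 x u; have := gdist_lt c2 v y; lia.
- have := gdist_lt c2 x v; have := gdist_lt c1 u y; lia.
- have := gdist_lt c2 x y; lia.
Qed.
End Glue.

Local Open Scope ring_scope.

Section Sums.
Variables (R : fieldType) (n : nat).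
Implicit Types (G W K : 'I_n -> R).

Lemma sum_delta G u : \sum_y G y * (y == u)%:R = G u.
Proof.
rewrite (bigD1 u) //= eqxx mulr1 big1 ?addr0 // => y /negPf ->; by rewrite mulr0.
Qed.

Lemma sum_lin G K (a c : R) u :
  \sum_y G y * (a * K y - (y == u)%:R * c) = a * \sum_y G y * K y - c * G u.
Proof.
rewrite -(sum_delta G u) !mulr_sumr -sumrB; apply: eq_bigr => y _; ring.
Qed.

Lemma sum_lin0 K (a c : R) u :
  \sum_y (a * K y - (y == u)%:R * c) = a * \sum_y K y - c.
Proof.
have := sum_lin (fun _ => 1) K a c u.
under eq_bigr do rewrite mul1r.
under [\sum_y 1 * _]eq_bigr do rewrite mul1r.
by rewrite mulr1.
Qed.

Lemma sum_affine (A : R) G W :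
  \sum_y (A + G y) * W y = A * \sum_y W y + \sum_y G y * W y.
Proof. rewrite mulr_sumr -big_split; apply: eq_bigr => y _ /=; ring. Qed.

Lemma sum3 G W K u (s r : R) :
  \sum_y G y * (W y + (y == u)%:R * s + r * K y) =
  \sum_y G y * W y + G u * s + r * \sum_y G y * K y.
Proof.
rewrite -(sum_delta G u) mulr_suml mulr_sumr -!big_split; apply: eq_bigr => y _ /=; ring.
Qed.
End Sums.

Section Inv.
Variables (R : fieldType) (n : nat) (D : 'M[R]_n).
Hypothesis U : D \in unitmx.

Lemma rowKc x : \sum_y D x y * curv_inv D y 0 = n%:R.
Proof.
have : D *m curv_inv D = n%:R *: const_mx 1.
  by rewrite /curv_inv scalemxAr mulmxA mulmxV // mul1mx.
by move/matrixP/(_ x 0); rewrite !mxE mulr1.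
Qed.

Lemma inj_unit (w : 'cV[R]_n) : D *m w = 0 -> w = 0.
Proof. by move=> H; rewrite -(mulKmx U w) H mulmx0. Qed.
End Inv.

Lemma scal (R : realFieldType) (c1 c2 s t s' t' : R) :
  (2 + c1) * (2 + c2) != 4 ->
  s' = -(s + t) * c1 - s -> t' = -(s + t) ->
  s = -(s' + t') * c2 - s' -> t = -(s' + t') ->
  [/\ s = 0, t = 0, s' = 0 & t' = 0].
Proof.
move=> HZ Ha Hb Hc Hd.
have ss : s' = s by rewrite Hb in Hd; lra.
rewrite ss Hb in Ha Hc.
have H1 : 2 * s = -(s + t) * c1 by lra.
have H2 : 2 * s = t * c2 by lra.
have Ht : t * ((2 + c1) * (2 + c2) - 4) = 0.
  transitivity (2 * (t * c2) + c1 * (2 * t + t * c2)); first ring.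
  rewrite -H2; transitivity (2 * (2 * s) - 2 * (-(s + t) * c1)); first ring.
  rewrite -H1; ring.
have t0 : t = 0.
  by move/eqP: Ht; rewrite mulf_eq0 subr_eq0 (negPf HZ) orbF => /eqP.
have s0 : s = 0 by rewrite t0 mul0r in H2; lra.
by split => //; [rewrite ss | rewrite Hb]; rewrite s0 ?t0; ring.
Qed.

End Helpers.
Import Helpers.
Local Open Scope ring_scope.

Theorem mainTheorem5 (R : realFieldType) (n1 n2 : nat)
  (e1 : rel 'I_n1) (e2 : rel 'I_n2) (u : 'I_n1) (v : 'I_n2) :
  (2 <= n1)%N -> (2 <= n2)%N ->
  simple_graph e1 -> simple_graph e2 ->
  connected_graph e1 -> connected_graph e2 ->
  let D1 : 'M[R]_n1 := dist_mx R e1 in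
  let D2 : 'M[R]_n2 := dist_mx R e2 in
  let DG : 'M[R]_(n1 + n2) := dist_mx R (glue e1 e2 u v) in
  D1 \in unitmx -> D2 \in unitmx ->
  let K1 := curv_inv D1 in
  let K2 := curv_inv D2 in
  let k1 := total_curv K1 in
  let k2 := total_curv K2 in
  let Z := (2 + k1 / n1%:R) * (2 + k2 / n2%:R) in
  Z != 4 ->
  let ku := K1 u 0 in
  let kv := K2 v 0 in
  ku != 0 -> kv != 0 ->
  let alpha := 2 * (n1 + n2)%:R * k2 / (n1%:R * n2%:R * (Z - 4)) in
  let beta := 2 * (n1 + n2)%:R * k1 / (n1%:R * n2%:R * (Z - 4)) in
  let gamma := (1 - k1 / (2 * ku)) * alpha in
  let delta := (1 - k2 / (2 * kv)) * beta in
  DG \in unitmx /\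
  let KG := curv_inv DG in
  (forall x : 'I_n1, x != u -> KG (lshift n2 x) 0 = alpha * K1 x 0) /\
  (forall y : 'I_n2, y != v -> KG (rshift n1 y) 0 = beta * K2 y 0) /\
  KG (lshift n2 u) 0 = gamma * ku /\
  KG (rshift n1 v) 0 = delta * kv.
Proof.
move=> h1 h2 _ _ c1 c2 D1 D2 DG U1 U2 K1 K2 k1 k2 Z HZ ku kv Hku Hkv
  alpha beta gamma delta.
have n1P : n1%:R != 0 :> R by rewrite pnatr_eq0; lia.
have n2P : n2%:R != 0 :> R by rewrite pnatr_eq0; lia.
have DGll x y : DG (lshift n2 x) (lshift n2 y) = D1 x y.
  by rewrite !mxE gdist_glue // /fG !(splitL, splitR).
have DGrr x y : DG (rshift n1 x) (rshift n1 y) = D2 x y.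
  by rewrite !mxE gdist_glue // /fG !(splitL, splitR).
have DGlr x y : DG (lshift n2 x) (rshift n1 y) = D1 x u + 1 + D2 v y.
  by rewrite !mxE gdist_glue // /fG !(splitL, splitR) !natrD.
have DGrl x y : DG (rshift n1 x) (lshift n2 y) = D2 x v + 1 + D1 u y.
  by rewrite !mxE gdist_glue // /fG !(splitL, splitR) !natrD.
have D1uu : D1 u u = 0 by rewrite mxE (gdistxx c1).
have D2vv : D2 v v = 0 by rewrite mxE (gdistxx c2).
have sumDG a (W : 'cV[R]_(n1 + n2)) : (DG *m W) a 0 =
   \sum_x DG a (lshift n2 x) * W (lshift n2 x) 0 +
   \sum_y DG a (rshift n1 y) * W (rshift n1 y) 0.
  by rewrite mxE big_split_ord.
have rK1 := rowKc U1; have rK2 := rowKc U2.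
have Z4 : Z - 4 != 0 by rewrite subr_eq0.
have UG : DG \in unitmx.
  rewrite -unitmx_tr unitmxE unitfE; apply/negP => /det0P [w wn0 wD].
  have HW : DG *m w^T = 0 by rewrite -[DG]trmxK -trmx_mul wD trmx0.
  set W := w^T in HW.
  suff W0 : W = 0 by move: wn0; rewrite -[w]trmxK -/W W0 trmx0 eqxx.
  pose s := \sum_y W (rshift n1 y) 0.
  pose t := \sum_y D2 v y * W (rshift n1 y) 0.
  pose s' := \sum_x W (lshift n2 x) 0.
  pose t' := \sum_x D1 u x * W (lshift n2 x) 0.
  have top x : \sum_y D1 x y * W (lshift n2 y) 0 + ((D1 x u + 1) * s + t) = 0.
    transitivity ((DG *m W) (lshift n2 x) 0); last by rewrite HW mxE.
    rewrite sumDG; congr (_ + _); first by apply: eq_bigr => y _; rewrite DGll.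
    rewrite (eq_bigr (fun y => (D1 x u + 1 + D2 v y) * W (rshift n1 y) 0)).
      by rewrite sum_affine.
    by move=> y _; rewrite DGlr.
  have bot y : (D2 y v + 1) * s' + t' + \sum_z D2 y z * W (rshift n1 z) 0 = 0.
    transitivity ((DG *m W) (rshift n1 y) 0); last by rewrite HW mxE.
    rewrite sumDG; congr (_ + _); last by apply: eq_bigr => z _; rewrite DGrr.
    rewrite (eq_bigr (fun x => (D2 y v + 1 + D1 u x) * W (lshift n2 x) 0)).
      by rewrite sum_affine.
    by move=> x _; rewrite DGrl.
  have pE x : W (lshift n2 x) 0 = (-(s + t) / n1%:R) * K1 x 0 - (x == u)%:R * s.
    pose P : 'cV[R]_n1 := \col_y (W (lshift n2 y) 0 + (y == u)%:R * s + (s + t) / n1%:R * K1 y 0).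
    have : D1 *m P = 0.
      apply/matrixP => i j; rewrite (ord1 j) [RHS]mxE [LHS]mxE.
      under eq_bigr do rewrite [P _ _]mxE.
      rewrite sum3 rK1 divfK //.
      have := top i; lra.
    move/(inj_unit U1)/matrixP/(_ x 0); rewrite !mxE => H; lra.
  have qE y : W (rshift n1 y) 0 = (-(s' + t') / n2%:R) * K2 y 0 - (y == v)%:R * s'.
    pose P : 'cV[R]_n2 := \col_z (W (rshift n1 z) 0 + (z == v)%:R * s' + (s' + t') / n2%:R * K2 z 0).
    have : D2 *m P = 0.
      apply/matrixP => i j; rewrite (ord1 j) [RHS]mxE [LHS]mxE.
      under eq_bigr do rewrite [P _ _]mxE.
      rewrite sum3 rK2 divfK //.
      have := bot i; lra.
    move/(inj_unit U2)/matrixP/(_ y 0); rewrite !mxE => H; lra.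
  have Es' : s' = -(s + t) * (k1 / n1%:R) - s.
    rewrite /s'; under eq_bigr do rewrite pE.
    rewrite sum_lin0 -/(total_curv K1) -/k1; ring.
  have Et' : t' = -(s + t).
    rewrite /t'; under eq_bigr do rewrite pE.
    by rewrite sum_lin rK1 D1uu divfK // mulr0 subr0.
  have Es : s = -(s' + t') * (k2 / n2%:R) - s'.
    rewrite {1}/s; under eq_bigr do rewrite qE.
    rewrite sum_lin0 -/(total_curv K2) -/k2; ring.
  have Et : t = -(s' + t').
    rewrite {1}/t; under eq_bigr do rewrite qE.
    by rewrite sum_lin rK2 D2vv divfK // mulr0 subr0.
  have [s0 t0 s'0 t'0] := scal HZ Es' Et' Es Et.
  apply/matrixP => a j; rewrite (ord1 j) [RHS]mxE.
  case: (split_ordP a) => x ->; [rewrite pE s0 t0 | rewrite qE s'0 t'0]; ring.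
split => //.
pose c := alpha * k1 / 2.
have two0 : (2 : R) != 0 by rewrite pnatr_eq0.
have Hab : alpha * k1 = beta * k2 by rewrite /alpha /beta; ring.
have ZE : n1%:R * n2%:R * (Z - 4) = 2 * k1 * n2%:R + 2 * k2 * n1%:R + k1 * k2.
  rewrite /Z; field; by rewrite n1P n2P.
have den0 : 2 * k1 * n2%:R + 2 * k2 * n1%:R + k1 * k2 != 0.
  by rewrite -ZE !mulf_neq0.
have Iden : alpha * n1%:R + beta * n2%:R + alpha * k1 / 2 = (n1 + n2)%:R.
  rewrite /alpha /beta ZE; field; by rewrite den0.
pose Kc : 'cV[R]_(n1 + n2) := \col_i (match split i with
   | inl x => alpha * K1 x 0 - (x == u)%:R * c
   | inr y => beta * K2 y 0 - (y == v)%:R * c end).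
have HK : DG *m Kc = (n1 + n2)%:R *: const_mx 1.
  apply/matrixP => a j; rewrite (ord1 j) sumDG [RHS]mxE [X in _ * X]mxE mulr1.
  case: (split_ordP a) => x ->.
  - rewrite (eq_bigr (fun y => D1 x y * (alpha * K1 y 0 - (y == u)%:R * c))); last first.
      by move=> y _; rewrite DGll [Kc _ _]mxE splitL.
    rewrite (eq_bigr (fun y => (D1 x u + 1 + D2 v y) * (beta * K2 y 0 - (y == v)%:R * c))); last first.
      by move=> y _; rewrite DGlr [Kc _ _]mxE splitR.
    rewrite sum_lin sum_affine sum_lin0 sum_lin rK1 rK2 D2vv -/(total_curv K2) -/k2.
    rewrite -Iden /c Hab; by field.
  - rewrite (eq_bigr (fun y => (D2 x v + 1 + D1 u y) * (alpha * K1 y 0 - (y == u)%:R * c))); last first.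
      by move=> y _; rewrite DGrl [Kc _ _]mxE splitL.
    rewrite (eq_bigr (fun y => D2 x y * (beta * K2 y 0 - (y == v)%:R * c))); last first.
      by move=> y _; rewrite DGrr [Kc _ _]mxE splitR.
    rewrite sum_affine sum_lin0 !sum_lin rK1 rK2 D1uu -/(total_curv K1) -/k1.
    rewrite -Iden /c Hab; by field.
have KGE : curv_inv DG = Kc by rewrite /curv_inv scalemxAr -HK mulKmx.
rewrite /= KGE; split; [|split; [|split]].
- by move=> x /negPf xu; rewrite mxE splitL xu mul0r subr0.
- by move=> y /negPf yv; rewrite mxE splitR yv mul0r subr0.
- rewrite mxE splitL eqxx mul1r /gamma /c /ku; field; exact: Hku.
- rewrite mxE splitR eqxx mul1r /delta /c /kv Hab; field; exact: Hkv.
Qed.
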